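(* Let $G$ be a cograph. The following procedure always returns a recursively minimal coloring of $G$: Let $(T_G,t_G)$ be the discriminating cotree of $G$. Initially assign pairwise distinct colors to all vertices of $G$. Then traverse the inner vertices $v$ of $T_G$ from bottom to top (every vertex after all its descendants); whenever $t_G(v)=0$, let $\mathcal{G}$ be the set of connected components of $G(v)$, choose $G^*\in\mathcal{G}$ with maximum chromatic number $\chi(G^* )$, set $S:=\sigma(V(G^* ))$, and for every $G_j\in\mathcal{G}$ with $G_j\neq G^*$ choose (arbitrarily) an injective map $\phi:\sigma(V(G_j))\to S$ and replace $\sigma(x)$ by $\phi(\sigma(x))$ for all $x\in V(G_j)$; when $t_G(v)=1$ nothing is done. Moreover, every recursively minimal coloring of $G$ can be obtained as an output of this procedure for suitable choices made in it.
   Context: All graphs are finite, simple and undirected. A (proper vertex) coloring of $G=(V,E)$ is a surjective map $\sigma:V\to S$ with $\sigma(x)\neq\sigma(y)$ whenever $xy\in E$; $\chi(G)$ is the chromatic number. A cograph is a graph that is $K_1$, or a disjoint union of cographs, or a join of cographs. A cotree $(T,t)$ of a cograph $G$ is a rooted tree $T$ with leaf set $V$ and a labeling $t:V^0(T)\to\{0,1\}$ of its inner vertices such that for every inner vertex $u$, $G(u):=G[L(T(u))]$ (with $L(T(u))$ the leaves descending from $u$) is the disjoint union (if $t(u)=0$) or the join (if $t(u)=1$) of the graphs $G(v)$, $v$ a child of $u$. The discriminating cotree of $G$ is the unique cotree in which $t(u)\neq t(v)$ for every edge $uv$ of $T$ between two inner vertices. Color-minimal cographs are colored graphs $(G,\sigma)$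 ($\sigma$ a proper coloring) defined recursively: $(G,\sigma)$ is color-minimal if $|\sigma(V)|=\chi(G)$ and either $G=K_1$, or $G$ is the disjoint union, or the join, of at least two graphs $G_i$ such that each $(G_i,\sigma|_{V(G_i)})$ is a color-minimal cograph. A coloring $\sigma$ of $G$ is recursively minimal if $(G,\sigma)$ is a color-minimal cograph. *)

(* Defs.v *)
From mathcomp Require Import all_boot.
Set Implicit Arguments. Unset Strict Implicit. Unset Printing Implicit Defensive.

Record sgraph (V : finType) := SGraph {
  adj : rel V;
  adj_sym : symmetric adj;
  adj_irr : irreflexive adj }.

Section Graphs.
Variables (V : finType) (G : sgraph V).

(* the parts of P (a partition of A) pairwise see each other through
   no edges (b = false, disjoint union) or all edges (b = true, join) *)
Definition cross_all (P : {set {set V}}) (b : bool) : Prop :=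
  forall B1 B2, B1 \in P -> B2 \in P -> B1 != B2 ->
  forall x y, x \in B1 -> y \in B2 -> adj G x y = b.

(* cographs, stated for induced subgraphs G[A] *)
Inductive cograph_on : {set V} -> Prop :=
| cograph_K1 : forall x, cograph_on [set x]
| cograph_op : forall (A : {set V}) (P : {set {set V}}) (b : bool),
    partition P A -> 2 <= #|P| -> cross_all P b ->
    (forall B, B \in P -> cograph_on B) -> cograph_on A.

Definition cograph : Prop := cograph_on [set: V].

Definition colorableb (X : {set V}) (k : nat) : bool :=
  [exists f : {ffun V -> 'I_k},
     [forall x in X, forall y in X, adj G x y ==> (f x != f y)]].

Lemma colorable_exists (X : {set V}) : exists k, colorableb X k.
Proof.
exists #|V|; apply/existsP; exists [ffun x => enum_rank x].
apply/forallP => x; apply/implyP => _; apply/forallP => y; apply/implyP => _.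
apply/implyP => hxy; rewrite !ffunE; apply/negP => /eqP /enum_rank_inj exy.
by move: hxy; rewrite exy adj_irr.
Qed.

Definition chi (X : {set V}) : nat := ex_minn (colorable_exists X).

Definition proper_on (X : {set V}) (s : V -> nat) : Prop :=
  forall x y, x \in X -> y \in X -> adj G x y -> s x != s y.

Definition colors (s : V -> nat) (X : {set V}) : seq nat :=
  undup [seq s x | x <- enum X].

Definition ncol (s : V -> nat) (X : {set V}) : nat := size (colors s X).

Inductive color_minimal (s : V -> nat) : {set V} -> Prop :=
| cm_K1 : forall x, ncol s [set x] = chi [set x] -> color_minimal s [set x]
| cm_op : forall (A : {set V}) (P : {set {set V}}) (b : bool),
    partition P A -> 2 <= #|P| -> cross_all P b ->
    (forall B, B \in P -> color_minimal s B) ->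
    ncol s A = chi A -> color_minimal s A.

Definition rec_minimal (s : V -> nat) : Prop :=
  proper_on [set: V] s /\ color_minimal s [set: V].

Definition restr (A : {set V}) : rel V :=
  fun x y => [&& adj G x y, x \in A & y \in A].

Definition components (A : {set V}) : {set {set V}} :=
  [set [set y in A | connect (restr A) x y] | x in A].

End Graphs.

Inductive cotree (V : Type) :=
| Leaf of V
| Node of bool & seq (cotree V).
Arguments Leaf {V}.
Arguments Node {V}.

Fixpoint leaves (V : Type) (t : cotree V) : seq V :=
  match t with
  | Leaf v => [:: v]
  | Node _ cs => flatten (map (@leaves V) cs)
  end.

(* the vertex of T at position p (a path of child indices from the root) *)
Fixpoint subtree (V : Type) (t : cotree V) (p : seq nat) : option (cotree V) :=
  match p with
  | [::] => Some t
  | i :: p' =>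
      match t with
      | Leaf _ => None
      | Node _ cs => obind (fun c => subtree c p') (onth cs i)
      end
  end.

Section Cotrees.
Variables (V : finType) (G : sgraph V).

Definition leafset (t : cotree V) : {set V} := [set x | x \in leaves t].

(* (T,t) is a cotree of G: leaf set is V (each vertex exactly once),
   every inner vertex has at least two children, and G(u) is the disjoint
   union (label false = 0) or join (label true = 1) of the G(v), v child of u *)
Definition is_cotree (T : cotree V) : Prop :=
  perm_eq (leaves T) (enum V) /\
  forall p b cs, subtree T p = Some (Node b cs) ->
    2 <= size cs /\
    forall i j ci cj, i != j -> onth cs i = Some ci -> onth cs j = Some cj ->
      forall x y, x \in leaves ci -> y \in leaves cj -> adj G x y = b.

Definition discriminating (T : cotree V) : Prop :=
  forall p b cs, subtree T p = Some (Node b cs) ->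
  forall i b' cs', onth cs i = Some (Node b' cs') -> b' != b.

Definition discr_cotree (T : cotree V) : Prop :=
  is_cotree T /\ discriminating T.

Definition inner (T : cotree V) (p : seq nat) : Prop :=
  exists b cs, subtree T p = Some (Node b cs).

Definition traversal (T : cotree V) (ord : seq (seq nat)) : Prop :=
  uniq ord /\ (forall p, p \in ord <-> inner T p) /\
  (forall p q, p \in ord -> q \in ord -> prefix p q -> p != q ->
     index q ord < index p ord).

Definition union_step (L : {set V}) (s s' : V -> nat) : Prop :=
  exists2 Gs, Gs \in components G L &
  (forall Gj, Gj \in components G L -> chi G Gj <= chi G Gs) /\
  exists Phi : {set V} -> nat -> nat,
    (forall Gj, Gj \in components G L -> Gj != Gs ->
       {in colors s Gj, injective (Phi Gj)} /\
       {in colors s Gj, forall c, Phi Gj c \in colors s Gs} /\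
       {in Gj, forall x, s' x = Phi Gj (s x)}) /\
    (forall x, x \notin L :\: Gs -> s' x = s x).

Definition step (T : cotree V) (p : seq nat) (s s' : V -> nat) : Prop :=
  match subtree T p with
  | Some (Node false cs) => union_step (leafset (Node false cs)) s s'
  | _ => s' =1 s
  end.

Fixpoint run (T : cotree V) (ord : seq (seq nat)) (s s' : V -> nat) : Prop :=
  match ord with
  | [::] => s' =1 s
  | p :: ord' => exists s1, step T p s s1 /\ run T ord' s1 s'
  end.

End Cotrees.

(* Main.v *)
Require Import Defs.
From mathcomp Require Import all_boot.
From Stdlib Require Import FunctionalExtensionality.
From Stdlib Require List.
Set Implicit Arguments. Unset Strict Implicit. Unset Printing Implicit Defensive.

Section A.
Variables (V : finType) (G : sgraph V).
Implicit Types (s : V -> nat) (X Y A B : {set V}).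

Lemma size_eqi (T : eqType) (a b : seq T) : uniq a -> uniq b -> a =i b -> size a = size b.
Proof. by move=> ua ub ab; apply: perm_size; apply: uniq_perm. Qed.

Lemma colorsP s X c : reflect (exists2 x, x \in X & c = s x) (c \in colors s X).
Proof.
rewrite /colors mem_undup; apply: (iffP mapP) => [[x]|[x]]; rewrite ?mem_enum; by exists x;
  rewrite ?mem_enum.
Qed.

Lemma colors_mem s X x : x \in X -> s x \in colors s X.
Proof. by move=> xX; apply/colorsP; exists x. Qed.

Lemma colors_uniq s X : uniq (colors s X). Proof. exact: undup_uniq. Qed.

Lemma ncol_sub s X s' Y : {subset colors s X <= colors s' Y} -> ncol s X <= ncol s' Y.
Proof. by move=> H; apply: uniq_leq_size => //; exact: colors_uniq. Qed.

Lemma ncol_eqi s X s' Y : colors s X =i colors s' Y -> ncol s X = ncol s' Y.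
Proof. by move=> H; apply: size_eqi; rewrite ?colors_uniq. Qed.

Lemma ncol_eq_on s s' X : {in X, s =1 s'} -> ncol s X = ncol s' X.
Proof.
move=> H; apply: ncol_eqi => c; apply/colorsP/colorsP => -[x xX ->]; exists x => //;
  by rewrite H.
Qed.

Lemma proper_eq_on s s' X : {in X, s =1 s'} -> proper_on G X s -> proper_on G X s'.
Proof. by move=> H P x y xX yX a; rewrite -!H //; apply: P. Qed.

Lemma proper_on_sub X Y s : X \subset Y -> proper_on G Y s -> proper_on G X s.
Proof. by move=> /subsetP XY P x y xX yX; apply: P; apply: XY. Qed.

Lemma ncol_relabel s s' g X : {in X, forall x, s' x = g (s x)} ->
  {in colors s X &, injective g} -> ncol s' X = ncol s X.
Proof.
move=> H inj; rewrite /ncol -(size_map g (colors s X)); apply: size_eqi.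
- exact: colors_uniq.
- by rewrite map_inj_in_uniq // colors_uniq.
move=> c; apply/colorsP/mapP => [[x xX ->]|[d /colorsP[x xX ->] ->]].
  by exists (s x); [apply: colors_mem | rewrite H].
by exists x; rewrite // H.
Qed.

Lemma chi_le_ncol X s x0 : x0 \in X -> proper_on G X s -> chi G X <= ncol s X.
Proof.
move=> x0X P; rewrite /chi; case: ex_minnP => m _ Hmin; apply: Hmin.
have: 0 < ncol s X by rewrite /ncol lt0n size_eq0; apply/eqP => E;
  move: (colors_mem s x0X); rewrite E.
case E: (ncol s X) => [//|n] _.
apply/existsP; exists [ffun y => inord (index (s y) (colors s X)) : 'I_n.+1].
apply/forallP => x; apply/implyP => xX; apply/forallP => y; apply/implyP => yX.
apply/implyP => a; rewrite !ffunE; apply/negP => /eqP /(congr1 (@nat_of_ord _)).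
have lt z : z \in X -> index (s z) (colors s X) <= n.
  by move=> zX; rewrite -ltnS -E /ncol index_mem colors_mem.
rewrite !inordK ?ltnS ?lt // => /(congr1 (fun i => nth 0 (colors s X) i)).
rewrite !nth_index ?colors_mem // => /eqP; exact/negP/P.
Qed.

Lemma chi_opt X : exists2 g : V -> nat, proper_on G X g & ncol g X <= chi G X.
Proof.
rewrite /chi; case: ex_minnP => m /existsP [f /forallP Hf] _.
exists (fun x => val (f x)).
  move=> x y xX yX a; move: (Hf x); rewrite xX /= => /forallP /(_ y); rewrite yX a /=.
  by apply: contra => /eqP /val_inj ->.
apply: (@leq_trans (size (iota 0 m))); last by rewrite size_iota.
apply: uniq_leq_size; rewrite ?colors_uniq //.
by move=> c /colorsP [x _ ->]; rewrite mem_iota /= add0n ltn_ord.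
Qed.

Lemma chi_mono X Y : X \subset Y -> chi G X <= chi G Y.
Proof.
move=> /subsetP XY; rewrite {2}/chi; case: ex_minnP => m Hm _.
rewrite /chi; case: ex_minnP => m' _ Hmin; apply: Hmin.
move: Hm => /existsP [f /forallP Hf]; apply/existsP; exists f.
apply/forallP => x; apply/implyP => xX; apply/forallP => y; apply/implyP => yX.
by move: (Hf x); rewrite XY //= => /forallP /(_ y); rewrite XY.
Qed.

Lemma chi1 x : chi G [set x] = 1.
Proof.
rewrite /chi; case: ex_minnP => m Hm Hmin; apply/eqP; rewrite eqn_leq; apply/andP; split.
  apply: Hmin; apply/existsP; exists [ffun _ => ord0 : 'I_1].
  apply/forallP => y; apply/implyP; rewrite inE => /eqP ->.
  apply/forallP => z; apply/implyP; rewrite inE => /eqP ->.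
  by rewrite adj_irr.
case: m Hm {Hmin} => // /existsP [f _]; case: (f x) => //.
Qed.

Lemma colors1 s x : colors s [set x] = [:: s x].
Proof. by rewrite /colors enum_set1. Qed.

Lemma ncol1 s x : ncol s [set x] = 1.
Proof. by rewrite /ncol colors1. Qed.

Lemma ncolU s A B : (forall x y, x \in A -> y \in B -> s x != s y) ->
  ncol s (A :|: B) = ncol s A + ncol s B.
Proof.
move=> D; rewrite /ncol -size_cat; apply: size_eqi; rewrite ?colors_uniq //.
  rewrite cat_uniq !colors_uniq /= andbT; apply/hasPn => c /colorsP [y yB ->].
  by apply/colorsP => -[x xA] /eqP; apply/negP; rewrite eq_sym D.
move=> c; rewrite mem_cat; apply/colorsP/orP.
  by move=> [x]; rewrite inE => /orP [] xX ->; [left|right]; apply: colors_mem.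
by move=> [] /colorsP [x xX ->]; exists x; rewrite // inE xX ?orbT.
Qed.

End A.

Section B.
Variables (V : finType) (G : sgraph V).
Implicit Types (s : V -> nat) (X Y A B : {set V}) (t : cotree V) (cs : seq (cotree V)).

Definition dft : cotree V := Node false [::].
Notation ch cs i := (nth dft cs i).

Fixpoint cotree_indIn (P : cotree V -> Prop) (HL : forall v, P (Leaf v))
  (HN : forall b cs, (forall c, List.In c cs -> P c) -> P (Node b cs)) t : P t :=
  match t with
  | Leaf v => HL v
  | Node b cs => HN b cs ((fix go (l : seq (cotree V)) : forall c, List.In c l -> P c :=
      match l with
      | [::] => fun c H => False_ind _ H
      | c0 :: l' => fun c H => match H with
                    | or_introl E => eq_ind c0 P (cotree_indIn HL HN c0) c E
                    | or_intror H' => go l' c H' end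
      end) cs)
  end.

Lemma In_nth cs i : i < size cs -> List.In (ch cs i) cs.
Proof. elim: cs i => [|c cs IH] [|i] //= H; [left | right; apply: IH] => //. Qed.

Lemma cotree_ind2 (P : cotree V -> Prop) : (forall v, P (Leaf v)) ->
  (forall b cs, (forall i, i < size cs -> P (ch cs i)) -> P (Node b cs)) -> forall t, P t.
Proof.
move=> HL HN; apply: cotree_indIn => // b cs H; apply: HN => i ic; apply: H; exact: In_nth.
Qed.

Lemma onth_ch cs i : i < size cs -> onth cs i = Some (ch cs i).
Proof. by elim: cs i => [|c cs IH] [|i] //= H; apply: IH. Qed.

Lemma onth_some cs i c : onth cs i = Some c -> i < size cs /\ c = ch cs i.
Proof.
elim: cs i => [|c' cs IH] [|i] //=; first by case=> ->.
by move/IH => [H ->].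
Qed.

Lemma subtree_child b cs i p : i < size cs ->
  subtree (Node b cs) (i :: p) = subtree (ch cs i) p.
Proof. by move=> H; rewrite /= onth_ch. Qed.

Lemma leaves_nodeP b cs x :
  reflect (exists2 i, i < size cs & x \in leaves (ch cs i)) (x \in leaves (Node b cs)).
Proof.
rewrite /=; apply: (iffP idP).
  elim: cs => [|c cs IH] //=; rewrite mem_cat => /orP [H|/IH [i ic H]].
    by exists 0.
  by exists i.+1.
case=> i; elim: cs i => [|c cs IH] [|i] //= ic H; rewrite mem_cat ?H //.
by rewrite (IH i) ?orbT.
Qed.

Lemma in_leafset t x : (x \in leafset t) = (x \in leaves t).
Proof. by rewrite inE. Qed.

Definition wf t := uniq (leaves t) /\
  (forall p b cs, subtree t p = Some (Node b cs) ->
    2 <= size cs /\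
    forall i j ci cj, i != j -> onth cs i = Some ci -> onth cs j = Some cj ->
      forall x y, x \in leaves ci -> y \in leaves cj -> adj G x y = b) /\
  discriminating t.

Lemma wf_size b cs : wf (Node b cs) -> 2 <= size cs.
Proof. by case=> _ [/(_ [::] b cs erefl) []]. Qed.

Lemma wf_cross b cs i j x y : wf (Node b cs) -> i < size cs -> j < size cs -> i != j ->
  x \in leaves (ch cs i) -> y \in leaves (ch cs j) -> adj G x y = b.
Proof.
case=> _ [/(_ [::] b cs erefl) [_ H] _] ic jc ij; apply: (H i j (ch cs i) (ch cs j)) => //;
  exact: onth_ch.
Qed.

Lemma wf_disc b cs i b' cs' : wf (Node b cs) -> i < size cs ->
  ch cs i = Node b' cs' -> b' != b.
Proof.
case=> _ [_ D] ic E; apply: (D [::] b cs erefl i); rewrite onth_ch //; congr Some; exact E.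
Qed.

Lemma uniq_flatten_disj cs i j x : uniq (flatten (map (@leaves V) cs)) ->
  i < size cs -> j < size cs -> x \in leaves (ch cs i) -> x \in leaves (ch cs j) -> i = j.
Proof.
elim: cs i j => [|c cs IH] //= [|i] [|j] //=; rewrite cat_uniq => /and3P [_ H U] ic jc xi xj.
- case/negP: H; apply/hasP; exists x => //; change (x \in leaves (Node false cs)); apply/leaves_nodeP; by exists j.
- case/negP: H; apply/hasP; exists x => //; change (x \in leaves (Node false cs)); apply/leaves_nodeP; by exists i.
by rewrite (IH i j).
Qed.

Lemma wf_disj b cs i j x : wf (Node b cs) -> i < size cs -> j < size cs ->
  x \in leaves (ch cs i) -> x \in leaves (ch cs j) -> i = j.
Proof. by case=> U _; apply: uniq_flatten_disj. Qed.

Lemma uniq_child cs i : uniq (flatten (map (@leaves V) cs)) -> i < size cs ->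
  uniq (leaves (ch cs i)).
Proof.
elim: cs i => [|c cs IH] //= [|i] /=; rewrite cat_uniq => /and3P [U _ U'] // ic.
exact: IH.
Qed.

Lemma wf_child b cs i : wf (Node b cs) -> i < size cs -> wf (ch cs i).
Proof.
case=> U [H D] ic; split; first exact: uniq_child.
split=> [p b' cs' E|p b' cs' E]; [apply: (H (i :: p)) | apply: (D (i :: p))];
  by rewrite subtree_child.
Qed.

Lemma wf_leaf_nonempty t : wf t -> exists x, x \in leaves t.
Proof.
elim/cotree_ind2: t => [v|b cs IH] W; first by exists v; rewrite inE.
have s2 := wf_size W; have c0 : 0 < size cs := ltn_trans (ltnSn 0) s2.
have [x xl] := IH 0 c0 (wf_child W c0).
by exists x; apply/leaves_nodeP; exists 0.
Qed.

Lemma wf_child_nonempty b cs i : wf (Node b cs) -> i < size cs ->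
  exists x, x \in leaves (ch cs i).
Proof. by move=> W ic; exact: (wf_leaf_nonempty (wf_child W ic)). Qed.

Lemma wf_two b cs : wf (Node b cs) -> exists x y, [/\ x \in leaves (Node b cs),
  y \in leaves (Node b cs) & x != y].
Proof.
move=> W; have s2 := wf_size W.
have c0 : 0 < size cs := ltn_trans (ltnSn 0) s2.
have [x xl] := wf_child_nonempty W c0; have [y yl] := wf_child_nonempty W s2.
exists x, y; split.
- by apply/leaves_nodeP; exists 0.
- by apply/leaves_nodeP; exists 1.
by apply/eqP => E; subst y; have := wf_disj W c0 s2 xl yl.
Qed.

Lemma subtree_cat t p q : subtree t (p ++ q) = obind (fun u => subtree u q) (subtree t p).
Proof.
elim: p t => [|i p IH] [v|b cs] //=.
by case: (onth cs i) => //= c; rewrite IH.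
Qed.

Lemma wf_sub t p t' : wf t -> subtree t p = Some t' -> wf t'.
Proof.
elim: p t => [|i p IH] [v|b cs] //=; try by move=> W [<-].
case E: (onth cs i) => [c|] //= W S; case/onth_some: E => ic Ec; subst c.
by apply: (IH _ (wf_child W ic)).
Qed.

Lemma leaves_sub t p t' : subtree t p = Some t' -> {subset leaves t' <= leaves t}.
Proof.
elim: p t => [|i p IH] [v|b cs] //=; try by move=> [<-].
case E: (onth cs i) => [c|] //= S x xl; case/onth_some: E => ic Ec; subst c.
by change (x \in leaves (Node b cs)); apply/leaves_nodeP; exists i => //; apply: IH S x xl.
Qed.

Lemma comparable t p q t1 t2 x : wf t -> subtree t p = Some t1 -> subtree t q = Some t2 ->
  x \in leaves t1 -> x \in leaves t2 -> prefix p q || prefix q p.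
Proof.
elim: p q t => [|i p IH] [|j q] [v|b cs] //=; rewrite ?prefix0s ?orbT //.
case Ei: (onth cs i) => [ci|] //=; case Ej: (onth cs j) => [cj|] //= W S1 S2 x1 x2.
case/onth_some: Ei => ic Ei; case/onth_some: Ej => jc Ej; subst ci cj.
have xi := leaves_sub S1 x1; have xj := leaves_sub S2 x2.
have ij := wf_disj W ic jc xi xj; subst j.
rewrite /= !eqxx /=; exact: (IH q _ (wf_child W ic) S1 S2 x1 x2).
Qed.

End B.

Section C.
Variables (V : finType) (G : sgraph V).
Implicit Types (s : V -> nat) (X Y A B : {set V}) (t : cotree V) (cs : seq (cotree V)).
Notation ch cs i := (nth (dft V) cs i).
Notation wf := (wf G).

Definition rin (e : rel V) A : rel V := fun x y => [&& e x y, x \in A & y \in A].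
Definition E b : rel V := fun x y => (x != y) && (adj G x y != b).

Lemma connect_closed (e : rel V) (Z : {set V}) x y :
  (forall u w, u \in Z -> e u w -> w \in Z) -> connect e x y -> x \in Z -> y \in Z.
Proof.
move=> H /connectP [p pth ->]; elim: p x pth => //= z p IH x /andP [exz pth] xZ.
by apply: IH pth _; apply: H xZ exz.
Qed.

Lemma connect_mono (e e' : rel V) x y : (forall u w, e u w -> e' u w) ->
  connect e x y -> connect e' x y.
Proof. by move=> H; apply: connect_sub => u w /H; apply: connect1. Qed.

Lemma class_conn (T : eqType) (e : rel V) A (cl : V -> T) :
  (forall x y, x \in A -> y \in A -> cl x != cl y -> e x y) ->
  (forall x, x \in A -> exists2 z, z \in A & cl z != cl x) ->
  forall x y, x \in A -> y \in A -> connect (rin e A) x y.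
Proof.
move=> H Ex x y xA yA; case: (eqVneq (cl x) (cl y)) => cxy; last first.
  by apply: connect1; rewrite /rin H ?xA ?yA.
have [z zA czx] := Ex x xA.
apply: (@connect_trans _ _ z); apply: connect1; rewrite /rin ?xA ?yA zA H //.
  by rewrite eq_sym.
by rewrite -cxy.
Qed.

Lemma find_child cs i x : i < size cs -> x \in leaves (ch cs i) ->
  (forall j, j < size cs -> x \in leaves (ch cs j) -> j = i) ->
  find (fun c => x \in leaves c) cs = i.
Proof.
elim: cs i => [|c cs IH] // [|i] /= ic xi U.
  by rewrite xi.
case: ifP => xc; first by have := U 0 erefl xc.
congr S; apply: IH => // j jc xj; by case: (U j.+1 jc xj).
Qed.

Lemma wf_find b cs i x : wf (Node b cs) -> i < size cs -> x \in leaves (ch cs i) ->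
  find (fun c => x \in leaves c) cs = i.
Proof.
move=> W ic xi; apply: find_child => // j jc xj; exact: (wf_disj W jc ic xj xi).
Qed.

Lemma child_conn b cs i : wf (Node b cs) -> i < size cs ->
  forall x y, x \in leafset (ch cs i) -> y \in leafset (ch cs i) ->
  connect (rin (E b) (leafset (ch cs i))) x y.
Proof.
move=> W ic; have Wc := wf_child W ic.
case Ec: (ch cs i) Wc => [v|b' cs'] Wc x y.
  by rewrite !in_leafset !inE => /eqP -> /eqP ->; apply: connect0.
have nb : b' != b by apply: (wf_disc W ic Ec).
have s2 := wf_size Wc.
apply: (class_conn (cl := fun x => find (fun c => x \in leaves c) cs')).
- move=> u w; rewrite !in_leafset => /leaves_nodeP [j jc uj] /leaves_nodeP [k kc wk].
  rewrite (wf_find Wc jc uj) (wf_find Wc kc wk) => jk.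
  rewrite /E (wf_cross Wc jc kc jk uj wk) nb andbT.
  apply/eqP => E'; subst w; move/eqP: jk; apply; exact: (wf_disj Wc jc kc uj wk).
- move=> u; rewrite in_leafset => /leaves_nodeP [j jc uj].
  set k := if j == 0 then 1 else 0.
  have kc : k < size cs' by rewrite /k; case: (j == 0) => //; exact: ltn_trans (ltnSn 0) s2.
  have [z zk] := wf_child_nonempty Wc kc.
  exists z; first by rewrite in_leafset; apply/leaves_nodeP; exists k.
  rewrite (wf_find Wc jc uj) (wf_find Wc kc zk) /k; by case: (j).
Qed.

Definition compo A x := [set y in A | connect (restr G A) x y].

Lemma restr_sym A : symmetric (restr G A).
Proof. by move=> x y; rewrite /restr (adj_sym G x y); case: (x \in A); case: (y \in A); rewrite ?andbF. Qed.

Lemma comp_child cs i x : wf (Node false cs) -> i < size cs -> x \in leaves (ch cs i) ->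
  compo (leafset (Node false cs)) x = leafset (ch cs i).
Proof.
move=> W ic xi; apply/setP => y; rewrite inE; apply/andP/idP.
  move=> [yL cxy]; apply: (connect_closed _ cxy); last by rewrite in_leafset.
  move=> u w ui /and3P [a _ wL]; rewrite in_leafset in ui; rewrite in_leafset.
  move: wL; rewrite in_leafset => /leaves_nodeP [j jc wj].
  case: (eqVneq j i) => [E'|ji]; first by subst j.
  by rewrite (wf_cross W ic jc _ ui wj) // eq_sym in a.
move=> yi; split.
  rewrite !in_leafset; apply/leaves_nodeP; exists i => //; by rewrite -in_leafset.
have := child_conn W ic (x := x) (y := y); rewrite in_leafset => /(_ xi yi) C.
apply: connect_mono C => u w /and3P [/andP [_ a] ui wi]; rewrite /restr.
have sub : forall z, z \in leafset (ch cs i) -> z \in leafset (Node false cs).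
  by move=> z; rewrite !in_leafset => zi; apply/leaves_nodeP; exists i.
move: a; case: (adj G u w) => // _; by rewrite /= !sub.
Qed.

Lemma components_node cs X : wf (Node false cs) ->
  X \in components G (leafset (Node false cs)) <->
  exists2 i, i < size cs & X = leafset (ch cs i).
Proof.
move=> W; split.
  case/imsetP => x; rewrite in_leafset => /leaves_nodeP [i ic xi] ->.
  by exists i => //; apply: comp_child.
case=> i ic ->; have [x xi] := wf_child_nonempty W ic.
apply/imsetP; exists x; first by rewrite in_leafset; apply/leaves_nodeP; exists i.
by rewrite -(comp_child W ic xi).
Qed.

Lemma wf_T T : discr_cotree G T -> wf T /\ forall x, x \in leaves T.
Proof.
case=> [[P H] D]; split; last by move=> x; rewrite (perm_mem P) mem_enum.
split; first by rewrite (perm_uniq P) enum_uniq.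
by split.
Qed.

End C.

Section D.
Variables (V : finType) (G : sgraph V).
Implicit Types (s : V -> nat) (X Y A B : {set V}) (t : cotree V) (cs : seq (cotree V)).
Notation ch cs i := (nth (dft V) cs i).
Notation wf := (wf G).

Definition ustep L Gs s s' :=
  exists Phi : {set V} -> nat -> nat,
    (forall Gj, Gj \in components G L -> Gj != Gs ->
       {in colors s Gj, injective (Phi Gj)} /\
       {in colors s Gj, forall c, Phi Gj c \in colors s Gs} /\
       {in Gj, forall x, s' x = Phi Gj (s x)}) /\
    (forall x, x \notin L :\: Gs -> s' x = s x).

Lemma leafset_inj b cs i j : wf (Node b cs) -> i < size cs -> j < size cs ->
  leafset (ch cs i) = leafset (ch cs j) -> i = j.
Proof.
move=> W ic jc E; have [x xi] := wf_child_nonempty W ic.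
apply: (wf_disj W ic jc xi); by rewrite -in_leafset -E in_leafset.
Qed.

Lemma child_sub b cs i x : i < size cs -> x \in leafset (ch cs i) ->
  x \in leafset (Node b cs).
Proof. by rewrite !in_leafset => ic xi; apply/leaves_nodeP; exists i. Qed.

Section U.
Variables (cs : seq (cotree V)) (k : nat).
Hypotheses (W : wf (Node false cs)) (kc : k < size cs).
Let L := leafset (Node false cs).
Let Gs := leafset (ch cs k).

Lemma ustep_out s s' x : ustep L Gs s s' -> x \notin L -> s' x = s x.
Proof. by case=> Phi [_ H] xL; apply: H; rewrite inE negb_and xL orbT. Qed.

Lemma ustep_Gs s s' x : ustep L Gs s s' -> x \in Gs -> s' x = s x.
Proof. by case=> Phi [_ H] xG; apply: H; rewrite inE xG. Qed.

Lemma ustep_child s s' i : ustep L Gs s s' -> i < size cs ->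
  exists g, [/\ {in colors s (leafset (ch cs i)) &, injective g},
    {in leafset (ch cs i), forall x, s' x = g (s x)} &
    {in colors s (leafset (ch cs i)), forall c, g c \in colors s Gs}].
Proof.
move=> U ic; case: (eqVneq i k) => [->|ik].
  by exists id; split => // x xG; rewrite (ustep_Gs U xG).
case: U => Phi [H _].
have [] := H (leafset (ch cs i)).
- by apply/components_node => //; exists i.
- by apply/eqP => E; move/eqP: ik; apply; apply: (leafset_inj W ic kc).
move=> inj [into eqs]; exists (Phi (leafset (ch cs i))); split => //.
by move=> c1 c2 h1 _; apply: inj.
Qed.

Lemma ustep_proper s s' : ustep L Gs s s' ->
  (forall i, i < size cs -> proper_on G (leafset (ch cs i)) s) -> proper_on G L s'.
Proof.
move=> U P x y; rewrite !in_leafset => /leaves_nodeP [i ic xi] /leaves_nodeP [j jc yj] a.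
case: (eqVneq i j) => [E|ij]; last by rewrite (wf_cross W ic jc ij xi yj) in a.
subst j; have [g [inj eqs _]] := ustep_child U ic.
rewrite -!in_leafset in xi yj; rewrite !eqs //; apply: contra (P i ic x y xi yj a).
by move=> /eqP /inj -> //; apply: colors_mem.
Qed.

Lemma ustep_colors s s' : ustep L Gs s s' -> colors s' L =i colors s Gs.
Proof.
move=> U c; apply/colorsP/idP.
  case=> x; rewrite in_leafset => /leaves_nodeP [i ic xi] ->.
  have [g [_ eqs into]] := ustep_child U ic; rewrite -in_leafset in xi.
  by rewrite eqs // into // colors_mem.
move=> /colorsP [z zG ->]; exists z; last by rewrite (ustep_Gs U zG).
exact: (child_sub false kc zG).
Qed.

Lemma ustep_ncol s s' : ustep L Gs s s' -> ncol s' L = ncol s Gs.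
Proof. by move=> U; apply: ncol_eqi; apply: ustep_colors. Qed.

Lemma mem_le_sumn (l : seq nat) c : c \in l -> c <= sumn l.
Proof.
elim: l => [|a l IH] //=; rewrite inE => /orP [/eqP ->|/IH H]; first exact: leq_addr.
exact: leq_trans H (leq_addl _ _).
Qed.

Lemma ustep_exists s : (forall i, i < size cs -> ncol s (leafset (ch cs i)) <= ncol s Gs) ->
  exists s', ustep L Gs s s'.
Proof.
move=> M; set cG := colors s Gs.
pose Phi X c := if c \in colors s X then nth 0 cG (index c (colors s X)) else c + (sumn cG).+1.
exists (fun x => if x \in L :\: Gs then Phi (compo G L x) (s x) else s x), Phi.
split; last by move=> x /negbTE ->.
move=> Gj /(components_node _ W) [i ic ->] ne.
have ik : i != k by apply: contra ne => /eqP ->.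
have lt c : c \in colors s (leafset (ch cs i)) -> index c (colors s (leafset (ch cs i))) < size cG.
  by move=> cc; apply: leq_trans (M i ic); rewrite /ncol index_mem.
split; [|split].
- move=> c1 h1 c2; rewrite /Phi h1; case: ifP => h2.
    move=> /eqP; rewrite nth_uniq ?lt ?colors_uniq // => /eqP E.
    by rewrite -(nth_index 0 h1) E nth_index.
  move=> E; have : nth 0 cG (index c1 (colors s (leafset (ch cs i)))) \in cG by rewrite mem_nth ?lt.
  by move/mem_le_sumn; rewrite E addnS ltnNge leq_addl.
- by move=> c cc; rewrite /Phi cc mem_nth // lt.
move=> x xi; have xL := child_sub false ic xi.
have xG : x \notin Gs.
  apply/negP; rewrite !in_leafset in xi * => xk.
  by move/eqP: ik; apply; apply: (wf_disj W ic kc xi xk).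
rewrite inE xG xL /=; congr Phi; rewrite in_leafset in xi.
exact: comp_child.
Qed.

End U.
End D.

Section E1.
Variables (V : finType) (G : sgraph V).
Implicit Types (s : V -> nat) (X Y A B : {set V}) (t : cotree V) (cs : seq (cotree V)).
Notation ch cs i := (nth (dft V) cs i).
Notation wf := (wf G).

Lemma sumn_eq cs (f g : cotree V -> nat) : (forall i, i < size cs -> f (ch cs i) = g (ch cs i)) ->
  sumn (map f cs) = sumn (map g cs).
Proof.
elim: cs => [|c cs IH] //= H; rewrite (H 0) // IH // => i ic; exact: (H i.+1).
Qed.

Lemma sumn_le cs (f g : cotree V -> nat) : (forall i, i < size cs -> f (ch cs i) <= g (ch cs i)) ->
  sumn (map f cs) <= sumn (map g cs).
Proof.
elim: cs => [|c cs IH] //= H; apply: leq_add; first exact: (H 0).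
by apply: IH => i ic; exact: (H i.+1).
Qed.

Lemma leafset_cons b c cs : leafset (Node b (c :: cs)) = leafset c :|: leafset (Node b cs).
Proof. by apply/setP => x; rewrite in_setU !in_leafset /= mem_cat. Qed.

Lemma leafset_leaf (v : V) : leafset (Leaf v) = [set v].
Proof. by apply/setP => x; rewrite in_leafset in_set1 inE. Qed.

Lemma ncol0 s : ncol s set0 = 0.
Proof. by rewrite /ncol /colors enum_set0. Qed.

Lemma ncol_join s b cs :
  (forall i j x y, i < size cs -> j < size cs -> i != j ->
     x \in leaves (ch cs i) -> y \in leaves (ch cs j) -> s x != s y) ->
  ncol s (leafset (Node b cs)) = sumn (map (fun c => ncol s (leafset c)) cs).
Proof.
elim: cs => [|c cs IH] H.
  by rewrite (_ : leafset _ = set0) ?ncol0 //; apply/setP => x; rewrite !inE.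
rewrite leafset_cons ncolU /=; last first.
  move=> x y; rewrite !in_leafset => xc /leaves_nodeP [j jc yj].
  exact: (H 0 j.+1).
by rewrite IH // => i j x y ic jc ij; apply: (H i.+1 j.+1).
Qed.

Lemma chi_join cs : wf (Node true cs) ->
  sumn (map (fun c => chi G (leafset c)) cs) <= chi G (leafset (Node true cs)).
Proof.
move=> W; have [g P le] := chi_opt G (leafset (Node true cs)).
apply: leq_trans le; rewrite ncol_join.
  apply: sumn_le => i ic; have [x xi] := wf_child_nonempty W ic.
  apply: (chi_le_ncol (x0 := x)); first by rewrite in_leafset.
  have sub : leafset (ch cs i) \subset leafset (Node true cs).
    by apply/subsetP => y; exact: child_sub.
  exact: (proper_on_sub sub P).
move=> i j x y ic jc ij xi yj; apply: P.
- by rewrite in_leafset; apply/leaves_nodeP; exists i.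
- by rewrite in_leafset; apply/leaves_nodeP; exists j.
exact: (wf_cross W ic jc ij xi yj).
Qed.

Definition kept (f : cotree V -> nat) cs := index (foldr maxn 0 (map f cs)) (map f cs).

Lemma foldr_max_mem (l : seq nat) : 0 < size l -> foldr maxn 0 l \in l.
Proof.
elim: l => [|a l IH] // _; case: l IH => [|b l] IH; first by rewrite /= maxn0 inE.
have mi : foldr maxn 0 (b :: l) \in b :: l by apply: IH.
rewrite [foldr _ _ (a :: _)]/= inE /maxn; case: ltnP => _; first by rewrite mi orbT.
by rewrite eqxx.
Qed.

Lemma foldr_max_ge (l : seq nat) c : c \in l -> c <= foldr maxn 0 l.
Proof.
elim: l => [|a l IH] //=; rewrite inE => /orP [/eqP ->|/IH H]; first exact: leq_maxl.
exact: leq_trans H (leq_maxr _ _).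
Qed.

Lemma kept_lt f cs : 0 < size cs -> kept f cs < size cs.
Proof.
move=> H; rewrite /kept -(size_map f) index_mem foldr_max_mem //; by rewrite size_map.
Qed.

Lemma kept_max f cs i : i < size cs -> f (ch cs i) <= f (ch cs (kept f cs)).
Proof.
move=> ic; have k := kept_lt f (leq_ltn_trans (leq0n _) ic).
rewrite -!(nth_map (dft V) 0) // nth_index ?foldr_max_mem ?size_map //;
  last exact: leq_ltn_trans (leq0n _) ic.
by apply: foldr_max_ge; rewrite mem_nth ?size_map.
Qed.

Lemma ok_leaf s (v : V) : proper_on G (leafset (Leaf v)) s /\
  ncol s (leafset (Leaf v)) = chi G (leafset (Leaf v)).
Proof.
rewrite leafset_leaf ncol1 chi1; split => // x y; rewrite !inE => /eqP -> /eqP ->.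
by rewrite adj_irr.
Qed.

Lemma memP_map cs B : reflect (exists2 i, i < size cs & B = leafset (ch cs i))
  (B \in map (@leafset V) cs).
Proof.
apply: (iffP (nthP set0)) => [[i ic E]|[i ic ->]].
  rewrite size_map in ic; exists i => //; by rewrite -E (nth_map (dft V)).
by exists i; rewrite ?size_map // (nth_map (dft V)).
Qed.

Lemma partition_node b cs : wf (Node b cs) ->
  [/\ partition [set X | X \in map (@leafset V) cs] (leafset (Node b cs)),
      1 < #|[set X | X \in map (@leafset V) cs]|,
      cross_all G [set X | X \in map (@leafset V) cs] b &
      forall B, B \in [set X | X \in map (@leafset V) cs] ->
        exists2 i, i < size cs & B = leafset (ch cs i)].
Proof.
move=> W; have mP B : B \in [set X | X \in map (@leafset V) cs] = (B \in map (@leafset V) cs).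
  by rewrite inE.
have s2 := wf_size W; have c0 : 0 < size cs := ltn_trans (ltnSn 0) s2.
split.
- apply/and3P; split.
  + apply/eqP/setP => x; apply/bigcupP/idP.
      case=> B; rewrite mP => /memP_map [i ic ->] xi; exact: child_sub xi.
    rewrite in_leafset => /leaves_nodeP [i ic xi]; exists (leafset (ch cs i)).
      by rewrite mP; apply/memP_map; exists i.
    by rewrite in_leafset.
  + apply/trivIsetP => B1 B2; rewrite !mP => /memP_map [i ic ->] /memP_map [j jc ->] ne.
    rewrite disjoint_subset; apply/subsetP => x xi; rewrite !inE; apply/negP => xj.
    rewrite !in_leafset in xi xj; have E := wf_disj W ic jc xi xj; subst j.
    by rewrite eqxx in ne.
  + rewrite mP; apply/negP => /memP_map [i ic E].
    have [x xi] := wf_child_nonempty W ic.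
    by move: (in_set0 x); rewrite E in_leafset xi.
- apply/card_gt1P; exists (leafset (ch cs 0)), (leafset (ch cs 1)); split.
  + by rewrite mP; apply/memP_map; exists 0.
  + by rewrite mP; apply/memP_map; exists 1.
  by apply/eqP => /(leafset_inj W c0 s2).
- move=> B1 B2; rewrite !mP => /memP_map [i ic ->] /memP_map [j jc ->] ne x y.
  rewrite !in_leafset => xi yj; apply: (wf_cross W ic jc _ xi yj).
  by apply: contra ne => /eqP ->.
by move=> B; rewrite mP => /memP_map.
Qed.

End E1.

Section E2.
Variables (V : finType) (G : sgraph V) (T : cotree V) (ord : seq (seq nat)).
Hypotheses (W : wf G T) (tr : traversal T ord).
Implicit Types (s : V -> nat) (X Y A B : {set V}) (t : cotree V) (cs : seq (cotree V)).
Notation ch cs i := (nth (dft V) cs i).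

Definition Inv (pre : seq (seq nat)) s :=
  (forall p t, p \in pre -> subtree T p = Some t ->
     proper_on G (leafset t) s /\ ncol s (leafset t) = chi G (leafset t)) /\
  (forall x y, s x = s y -> x = y \/
     exists p t, [/\ p \in pre, subtree T p = Some t, x \in leaves t & y \in leaves t]).

Lemma tr_node p : p \in ord -> exists b cs, subtree T p = Some (Node b cs).
Proof. by case: tr => _ [/(_ p) H _] /H. Qed.

Section Step.
Variables (pre post : seq (seq nat)) (p : seq nat).
Hypothesis (Eo : ord = pre ++ p :: post).

Lemma p_ord : p \in ord.
Proof. by rewrite Eo mem_cat inE eqxx orbT. Qed.

Lemma p_pre : p \notin pre.
Proof.
case: tr => U _; move: U; rewrite Eo cat_uniq => /and3P [_ H _].
by apply/negP => pp; case/negP: H; apply/hasP; exists p; rewrite ?inE ?eqxx.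
Qed.

Lemma idx_p : index p ord = size pre.
Proof. by rewrite Eo index_cat (negbTE p_pre) /= eqxx addn0. Qed.

Lemma idx_pre q : q \in pre -> index q ord < size pre.
Proof. by move=> qp; rewrite Eo index_cat qp index_mem. Qed.

Lemma in_pre q : index q ord < size pre -> q \in pre.
Proof.
rewrite Eo index_cat; case: ifP => // _; by rewrite ltnNge leq_addr.
Qed.

Lemma pre_ord q : q \in pre -> q \in ord.
Proof. by rewrite Eo mem_cat => ->. Qed.

Variables (b : bool) (cs : seq (cotree V)).
Hypothesis Sp : subtree T p = Some (Node b cs).

Lemma Wv : wf G (Node b cs).
Proof. exact: wf_sub W Sp. Qed.

Lemma sub_child i : i < size cs -> subtree T (rcons p i) = Some (ch cs i).
Proof. by move=> ic; rewrite -cats1 subtree_cat Sp /= onth_ch. Qed.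

Lemma desc_pre i b' cs' : i < size cs -> ch cs i = Node b' cs' -> rcons p i \in pre.
Proof.
move=> ic E; have S := sub_child ic; rewrite E in S.
case: tr => _ [M O].
have qo : rcons p i \in ord by apply/M; exists b', cs'.
apply: in_pre; rewrite -idx_p; apply: O => //; first exact: p_ord.
  exact: prefix_rcons.
by apply/eqP => /(congr1 size); rewrite size_rcons => /n_Sn.
Qed.

Lemma child_ok s i : Inv pre s -> i < size cs ->
  proper_on G (leafset (ch cs i)) s /\ ncol s (leafset (ch cs i)) = chi G (leafset (ch cs i)).
Proof.
move=> I ic; case E: (ch cs i) => [v|b' cs']; first exact: ok_leaf.
apply: (I.1 (rcons p i)); first exact: (desc_pre ic E).
by rewrite sub_child // E.
Qed.

Lemma anc q tq x : q \in pre -> subtree T q = Some tq -> x \in leaves tq ->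
  x \in leaves (Node b cs) -> exists2 i, i < size cs & {subset leaves tq <= leaves (ch cs i)}.
Proof.
move=> qp Sq xq xv; case/orP: (comparable W Sp Sq xv xq) => [/prefixP [r Er]|qpx].
  subst q; case: r Sq qp => [|i r] Sq qp.
    by rewrite cats0 in qp; move: p_pre; rewrite qp.
  move: Sq; rewrite subtree_cat Sp /=.
  case Ei: (onth cs i) => [c|] //= Sc; case/onth_some: Ei => ic Ec; subst c.
  by exists i => //; apply: leaves_sub Sc.
exfalso; case: tr => _ [_ O].
have qo := pre_ord qp.
case: (eqVneq q p) => [E|nqp]; first by subst q; move: p_pre; rewrite qp.
have := O q p qo p_ord qpx nqp; rewrite idx_p => H.
by have := ltn_trans H (idx_pre qp); rewrite ltnn.
Qed.


Lemma proper_true s : Inv pre s -> b = true -> proper_on G (leafset (Node b cs)) s.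
Proof.
move=> I bt x y; rewrite !in_leafset => /leaves_nodeP [i ic xi] /leaves_nodeP [j jc yj] a.
case: (eqVneq i j) => [E|ij].
  by subst j; apply: (child_ok I ic).1; rewrite ?in_leafset.
apply/eqP => sxy; case: (I.2 x y sxy) => [E|[q [t [qp St xt yt]]]].
  by subst y; rewrite adj_irr in a.
have xv : x \in leaves (Node b cs) by apply/leaves_nodeP; exists i.
have [k kc sub] := anc qp St xt xv.
have E1 := wf_disj Wv kc ic (sub x xt) xi; have E2 := wf_disj Wv kc jc (sub y yt) yj.
by rewrite -E1 -E2 eqxx in ij.
Qed.

Lemma inv_ext s q : Inv pre s -> (forall x y, s x = s y -> x = y \/
     exists p t, [/\ p \in rcons pre q, subtree T p = Some t, x \in leaves t & y \in leaves t]).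
Proof.
move=> I x y /(I.2 x y) [->|[r [t [rp St xt yt]]]]; first by left.
by right; exists r, t; rewrite mem_rcons inE rp orbT.
Qed.

Lemma step_true s : Inv pre s -> b = true -> Inv (rcons pre p) s.
Proof.
move=> I bt; have P := proper_true I bt; have Wb := Wv; have Sb := Sp.
have CO := child_ok; subst b.
split; last exact: inv_ext.
move=> q t; rewrite mem_rcons inE => /orP [/eqP -> | qp] St; last exact: I.1 q t qp St.
rewrite Sp in St; case: St => <-; split => //.
apply/eqP; rewrite eqn_leq; apply/andP; split; last first.
  have [x xv] := wf_leaf_nonempty Wb; apply: (chi_le_ncol (x0 := x)) => //.
  by rewrite in_leafset.
rewrite ncol_join.
  rewrite (sumn_eq (g := fun c => chi G (leafset c))); first exact: chi_join Wb.
  by move=> i ic; exact: (CO _ _ I ic).2.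
move=> i j x y ic jc ij xi yj; apply: P.
- by rewrite in_leafset; apply/leaves_nodeP; exists i.
- by rewrite in_leafset; apply/leaves_nodeP; exists j.
exact: (wf_cross Wb ic jc ij xi yj).
Qed.

Lemma step_false s s' : Inv pre s -> b = false ->
  union_step G (leafset (Node false cs)) s s' -> Inv (rcons pre p) s'.
Proof.
move=> I bf [Gs GsC [mx U]]; have Wf := Wv; have Sb := Sp.
have CO := child_ok; have AN := anc; subst b.
case/(components_node _ Wf): GsC => k kc EGs; subst Gs.
have U' : ustep G (leafset (Node false cs)) (leafset (ch cs k)) s s' := U.
set L := leafset (Node false cs).
have P' : proper_on G L s' := ustep_proper Wf kc U' (fun i ic => (CO _ _ I ic).1).
split.
- move=> q t; rewrite mem_rcons inE => /orP [/eqP -> | qp] St.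
    rewrite Sp in St; case: St => <-; split => //.
    apply/eqP; rewrite eqn_leq; apply/andP; split.
      rewrite (ustep_ncol Wf kc U') (CO _ _ I kc).2; apply: chi_mono.
      by apply/subsetP => y; exact: child_sub.
    have [x xv] := wf_leaf_nonempty Wf; apply: (chi_le_ncol (x0 := x)) => //.
    by rewrite in_leafset.
  have [Pq Nq] := I.1 q t qp St.
  case: (boolP [exists x, (x \in leaves t) && (x \in leaves (Node false cs))]).
    move=> /existsP [x /andP [xt xv]].
    have [i ic sub] := AN _ _ _ qp St xt xv.
    have [g [inj eqs into]] := ustep_child Wf kc U' ic.
    have eqs' : {in leafset t, forall x, s' x = g (s x)}.
      by move=> y; rewrite in_leafset => yt; apply: eqs; rewrite in_leafset; exact: sub.
    have inj' : {in colors s (leafset t) &, injective g}.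
      move=> c1 c2 /colorsP [y1 y1t ->] /colorsP [y2 y2t ->]; apply: inj;
        apply: colors_mem; rewrite in_leafset; apply: sub; by rewrite -in_leafset.
    split; last by rewrite (ncol_relabel eqs' inj') Nq.
    move=> y z yt zt a; rewrite !eqs' //; apply: contra (Pq y z yt zt a) => /eqP E.
    by apply/eqP; apply: inj' E; apply: colors_mem.
  move=> /existsPn nx.
  have eqt : {in leafset t, s =1 s'}.
    move=> y; rewrite in_leafset => yt; symmetry.  apply: (ustep_out U').
    by rewrite in_leafset; apply/negP => yv; have := nx y; rewrite yt yv.
  by split; [exact: proper_eq_on eqt Pq | rewrite -(ncol_eq_on eqt)].
have claim x y : x \in L -> y \notin L -> s' x = s' y -> False.
  move=> xL yL sxy; have : s' x \in colors s' L by apply: colors_mem.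
  rewrite (ustep_colors Wf kc U') => /colorsP [z zk Ez].
  rewrite (ustep_out U' yL) Ez in sxy.
  have zL : z \in L by apply: child_sub zk.
  case: (I.2 z y sxy) => [E|[q [t [qp St zt yt]]]]; first by subst z; rewrite zL in yL.
  have zv : z \in leaves (Node false cs) by rewrite -in_leafset.
  have [i ic sub] := AN _ _ _ qp St zt zv.
  by move: yL; rewrite /L in_leafset; move/negP; apply; apply/leaves_nodeP; exists i => //; apply: sub.
move=> x y sxy; case: (boolP (x \in L)) => xL; case: (boolP (y \in L)) => yL.
- right; exists p, (Node false cs); split => //; rewrite ?mem_rcons ?inE ?eqxx //;
  by rewrite -in_leafset.
- by exfalso; apply: claim sxy.
- by exfalso; apply: claim yL xL (esym sxy).
rewrite (ustep_out U' xL) (ustep_out U' yL) in sxy.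
exact: inv_ext I x y sxy.
Qed.

End Step.
Lemma inv_step pre post p s s' : ord = pre ++ p :: post -> Inv pre s ->
  step G T p s s' -> Inv (rcons pre p) s'.
Proof.
move=> Eo I; have [b [cs Sp]] := tr_node (p_ord Eo).
rewrite /step Sp; case: b Sp => Sp.
  move=> E; have -> : s' = s by apply: functional_extensionality.
  exact: (step_true Eo Sp I).
exact: (step_false Eo Sp I).
Qed.

Lemma inv_run o : forall pre rest s s', ord = pre ++ o ++ rest -> Inv pre s ->
  run G T o s s' -> Inv (pre ++ o) s'.
Proof.
elim: o => [|p o IH] pre rest s s' Eo I /=.
  move=> E; have -> : s' = s by apply: functional_extensionality.
  by rewrite cats0.
case=> s1 [St R]; have I1 := inv_step Eo I St.
rewrite -cat_rcons; apply: (IH _ rest _ _ _ I1 R); by rewrite cat_rcons.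
Qed.

Lemma inv_nil s0 : injective s0 -> Inv [::] s0.
Proof. by move=> inj; split => // x y /inj ->; left. Qed.

Lemma feasible pre post p s : ord = pre ++ p :: post -> Inv pre s ->
  exists s', step G T p s s'.
Proof.
move=> Eo I; rewrite /step.
case Sp: (subtree T p) => [[v|b cs]|]; try by exists s.
case: b Sp => Sp; first by exists s.
have Wf := wf_sub W Sp; have CO := child_ok Eo Sp I.
have s2 := wf_size Wf; have c0 : 0 < size cs := ltn_trans (ltnSn 0) s2.
set k := kept (fun c => chi G (leafset c)) cs.
have kc : k < size cs by apply: kept_lt.
have M : forall i, i < size cs -> ncol s (leafset (ch cs i)) <= ncol s (leafset (ch cs k)).
  move=> i ic; rewrite (CO i ic).2 (CO k kc).2.
  exact: (kept_max (fun c => chi G (leafset c)) ic).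
have [s' U] := ustep_exists Wf kc M.
exists s', (leafset (ch cs k)); first by apply/components_node => //; exists k.
split => // Gj /(components_node _ Wf) [i ic ->].
exact: (kept_max (fun c => chi G (leafset c)) ic).
Qed.

Lemma final_ok s : Inv ord s -> forall p t, subtree T p = Some t ->
  proper_on G (leafset t) s /\ ncol s (leafset t) = chi G (leafset t).
Proof.
move=> I p [v|b cs] St; first exact: ok_leaf.
apply: (I.1 p) => //; case: tr => _ [M _]; apply/M; by exists b, cs.
Qed.

Lemma cm_all s : (forall p t, subtree T p = Some t -> ncol s (leafset t) = chi G (leafset t)) ->
  forall t p, subtree T p = Some t -> color_minimal G s (leafset t).
Proof.
move=> H; elim/cotree_ind2 => [v|b cs IH] p Sp.
  rewrite leafset_leaf; apply: cm_K1; rewrite -leafset_leaf; exact: H p _ Sp.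
have Wn := wf_sub W Sp; have [Pa Pc Px Pm] := partition_node Wn.
apply: (cm_op Pa Pc Px); last exact: H p _ Sp.
move=> B /Pm [i ic ->]; apply: (IH i ic (rcons p i)).
by rewrite -cats1 subtree_cat Sp /= onth_ch.
Qed.

End E2.

Section F.
Variables (V : finType) (G : sgraph V).
Implicit Types (s : V -> nat) (X Y A B : {set V}) (t : cotree V) (cs : seq (cotree V)).
Notation ch cs i := (nth (dft V) cs i).
Notation wf := (wf G).

Definition alltight s t := forall p w, subtree t p = Some w ->
  ncol s (leafset w) = chi G (leafset w).

Lemma alltight_leaf s (v : V) : alltight s (Leaf v).
Proof. by move=> [|i p] w //= [<-]; exact: (ok_leaf G s v).2. Qed.

Lemma alltight_node s b cs : ncol s (leafset (Node b cs)) = chi G (leafset (Node b cs)) ->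
  (forall i, i < size cs -> alltight s (ch cs i)) -> alltight s (Node b cs).
Proof.
move=> H Hc [|i p] w /=; first by case=> <-.
case E: (onth cs i) => [c|] //= S; case/onth_some: E => ic Ec; subst c.
exact: Hc i ic p w S.
Qed.

Lemma cm_ncol s A : color_minimal G s A -> ncol s A = chi G A.
Proof. by case. Qed.

Definition U cs (S : seq nat) : {set V} := [set x | has (fun i => x \in leaves (ch cs i)) S].

Lemma U_all b cs : U cs (iota 0 (size cs)) = leafset (Node b cs).
Proof.
apply/setP => x; rewrite inE in_leafset; apply/hasP/leaves_nodeP.
  by case=> i; rewrite mem_iota add0n => /andP [_ ic] xi; exists i.
by case=> i ic xi; exists i; rewrite // mem_iota add0n ic.
Qed.

Lemma U_one cs (S : seq nat) i : i \in S -> all (pred1 i) S -> U cs S = leafset (ch cs i).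
Proof.
move=> iS /allP A; apply/setP => x; rewrite inE in_leafset; apply/hasP/idP.
  by case=> j /A /eqP ->.
by move=> xi; exists i.
Qed.

Section Core.
Variables (s : V -> nat) (A : {set V}) (P : {set {set V}}) (b' : bool).
Hypotheses (Hp : partition P A) (Hc : 1 < #|P|) (Hx : cross_all G P b').
Hypothesis IH : forall B, B \in P -> forall b cs S, wf (Node b cs) -> S != [::] ->
  all (fun i => i < size cs) S -> B = U cs S -> forall i, i \in S -> alltight s (ch cs i).

Lemma core b cs S i1 i2 : wf (Node b cs) -> all (fun i => i < size cs) S -> A = U cs S ->
  i1 \in S -> i2 \in S -> i1 != i2 -> forall i, i \in S -> alltight s (ch cs i).
Proof.
move=> W /allP Sall EA i1S i2S i12.
case/and3P: Hp => /eqP Cov Triv N0.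
have inA j y : j \in S -> y \in leaves (ch cs j) -> y \in A.
  by move=> jS yj; rewrite EA inE; apply/hasP; exists j.
have inS y : y \in A -> exists2 j, j \in S & y \in leaves (ch cs j).
  by rewrite EA inE => /hasP [j jS yj]; exists j.
have pb y : y \in A -> pblock P y \in P /\ y \in pblock P y.
  by rewrite -Cov => yc; rewrite pblock_mem // mem_pblock.
have Z : forall j y B, j \in S -> y \in leaves (ch cs j) -> B \in P -> y \in B ->
    {subset leaves (ch cs j) <= B}.
  move=> j y B jS yj BP yB z zj.
  have jc := Sall j jS.
  case: (eqVneq b' b) => [Eb|nb].
    have C := child_conn W jc (x := y) (y := z); rewrite !in_leafset in C.
    apply: (connect_closed _ (C yj zj)) yB => u w uB /and3P [/andP [uw a] _ wj].
    have wA : w \in A by apply: inA jS _; rewrite -in_leafset.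
    have [B2P wB2] := pb w wA.
    case: (eqVneq (pblock P w) B) => [<- //|ne].
    have ne' : B != pblock P w by rewrite eq_sym.
    by rewrite (Hx BP B2P ne' uB wB2) Eb eqxx in a.
  exfalso.
  have [x1 x1i] := wf_child_nonempty W (Sall i1 i1S).
  have [x2 x2i] := wf_child_nonempty W (Sall i2 i2S).
  have C : connect (rin (E G b) A) x1 x2.
    apply: (class_conn (cl := pblock P) _ _ (inA i1 x1 i1S x1i) (inA i2 x2 i2S x2i)).
      move=> u w uA wA ne; have [uP uu] := pb u uA; have [wP ww] := pb w wA.
      rewrite /E (Hx uP wP ne uu ww) nb andbT; apply: contra ne => /eqP ->.
      by rewrite eqxx.
    move=> u uA; have [uP uu] := pb u uA.
    have [B1 [B2 [B1P B2P ne]]] := card_gt1P Hc.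
    have [B3 [B3P B3u]] : exists B3, B3 \in P /\ B3 != pblock P u.
      case: (eqVneq B1 (pblock P u)) => [E1|n1]; last by exists B1.
      by exists B2; split => //; rewrite -E1 eq_sym.
    have [z' zB3] : exists z', z' \in B3.
      by apply/set0Pn; apply: contra N0 => /eqP <-.
    have zA : z' \in A by rewrite -Cov; apply/bigcupP; exists B3.
    by exists z' => //; rewrite (def_pblock Triv B3P zB3).
  have : x2 \in leafset (ch cs i1).
    apply: (connect_closed _ C); last by rewrite in_leafset.
    move=> u w; rewrite in_leafset => ui /and3P [/andP [_ a] _ wA].
    have [m mS wm] := inS w wA; rewrite in_leafset.
    case: (eqVneq m i1) => [<- //|mi].
    have mi' : i1 != m by rewrite eq_sym.
    by rewrite (wf_cross W (Sall i1 i1S) (Sall m mS) mi' ui wm) eqxx in a.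
  rewrite in_leafset => x2i1.
  by move/eqP: i12; apply; apply: (wf_disj W (Sall i1 i1S) (Sall i2 i2S) x2i1 x2i).
move=> i iS; have ic := Sall i iS.
have [x xi] := wf_child_nonempty W ic.
have xA := inA i x iS xi; have [BP xB] := pb x xA.
set B := pblock P x in BP xB.
pose SB := [seq j <- S | leafset (ch cs j) \subset B].
have iSB : i \in SB.
  rewrite mem_filter iS andbT; apply/subsetP => y; rewrite in_leafset.
  exact: (Z i x B iS xi BP xB y).
apply: (IH BP (b := b) (S := SB)) => //.
- by apply/eqP => E0; rewrite E0 in iSB.
- by apply/allP => j; rewrite mem_filter => /andP [_ /Sall].
apply/setP => y; rewrite inE; apply/idP/hasP.
  move=> yB; have yA : y \in A by rewrite -Cov; apply/bigcupP; exists B.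
  have [j jS yj] := inS y yA; exists j => //.
  rewrite mem_filter jS andbT; apply/subsetP => z; rewrite in_leafset.
  exact: (Z j y B jS yj BP yB z).
case=> j; rewrite mem_filter => /andP [/subsetP sub _] yj.
by apply: sub; rewrite in_leafset.
Qed.

End Core.

Lemma cm_tight s A : color_minimal G s A -> forall b cs S, wf (Node b cs) -> S != [::] ->
  all (fun i => i < size cs) S -> A = U cs S -> forall i, i \in S -> alltight s (ch cs i).
Proof.
elim=> [x Hx | A0 P b' Hp Hc Hx _ IH Hn] b cs S W Sne Sall EA i iS.
  have ic := (allP Sall) i iS.
  case Ec: (ch cs i) => [v|b2 cs2]; first exact: alltight_leaf.
  have Wc := wf_child W ic; rewrite Ec in Wc.
  have [y [z [yl zl yz]]] := wf_two Wc.
  have inX w : w \in leaves (Node b2 cs2) -> w = x.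
    move=> wl; apply/set1P; rewrite EA inE; apply/hasP; exists i => //; by rewrite Ec.
  by rewrite (inX y yl) (inX z zl) eqxx in yz.
case: S Sne Sall EA iS => [//|i0 S'] _ Sall EA iS.
case: (boolP (has (fun j => j != i0) (i0 :: S'))) => [/hasP [j jS ji0]|].
  apply: (core Hp Hc Hx IH W Sall EA jS _ ji0) => //; by rewrite inE eqxx.
rewrite -all_predC => /allP Al.
have Ai : all (pred1 i0) (i0 :: S') by apply/allP => j /Al /= /negPn.
have ii0 : i = i0 by apply/eqP; exact: (allP Ai) i iS.
subst i.
have ic := (allP Sall) i0 (mem_head _ _).
have EA' := EA; rewrite (U_one _ (mem_head _ _) Ai) in EA'.
case Ec: (ch cs i0) EA' => [v|b2 cs2] EA'; first exact: alltight_leaf.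
have Wc := wf_child W ic; rewrite Ec in Wc.
apply: alltight_node; first by rewrite -EA'.
have s2 := wf_size Wc; have c0 : 0 < size cs2 := ltn_trans (ltnSn 0) s2.
move=> j jc; apply: (core Hp Hc Hx IH Wc (S := iota 0 (size cs2)) (i1 := 0) (i2 := 1)).
- by apply/allP => k; rewrite mem_iota add0n.
- by rewrite (U_all b2) EA'.
- by rewrite mem_iota.
- by rewrite mem_iota.
- by [].
by rewrite mem_iota add0n.
Qed.

Lemma rm_alltight s T : wf T -> (forall x, x \in leaves T) -> rec_minimal G s ->
  proper_on G (leafset T) s /\ alltight s T.
Proof.
move=> W allT [P C].
have LT : leafset T = setT by apply/setP => x; rewrite in_leafset allT inE.
rewrite LT; split => //; rewrite -LT in C.
case: T W allT LT C => [v|b cs] W allT LT C; first exact: alltight_leaf.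
apply: alltight_node; first exact: cm_ncol.
have s2 := wf_size W; have c0 : 0 < size cs := ltn_trans (ltnSn 0) s2.
move=> i ic; apply: (cm_tight C (b := b) (S := iota 0 (size cs))) => //.
- by rewrite -(subnKC s2).
- by apply/allP => k; rewrite mem_iota add0n.
- by rewrite (U_all b).
by rewrite mem_iota add0n.
Qed.

End F.

Section G1.
Variables (V : finType).
Implicit Types (t : cotree V) (cs : seq (cotree V)).
Notation ch cs i := (nth (dft V) cs i).

Fixpoint gofn (f : cotree V -> seq (seq nat)) (i : nat) (l : seq (cotree V)) : seq (seq nat) :=
  match l with
  | [::] => [::]
  | c :: l' => map (cons i) (f c) ++ gofn f i.+1 l'
  end.

Fixpoint post (t : cotree V) : seq (seq nat) :=
  match t with
  | Leaf _ => [::]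
  | Node _ cs => gofn post 0 cs ++ [:: [::]]
  end.

Variable (kp : seq (cotree V) -> nat).

Definition mi b cs m (f : seq nat -> nat) i := if b || (i == kp cs) then m else f [:: i].

Fixpoint betago (bf : cotree V -> nat -> (seq nat -> nat) -> V -> nat) b cs m f x i
  (l : seq (cotree V)) : nat :=
  match l with
  | [::] => m
  | c :: l' => if x \in leaves c then bf c (mi b cs m f i) (fun q => f (i :: q)) x
               else betago bf b cs m f x i.+1 l'
  end.

Fixpoint beta (t : cotree V) (m : nat) (f : seq nat -> nat) (x : V) : nat :=
  match t with
  | Leaf _ => m
  | Node b cs => betago beta b cs m f x 0 cs
  end.

Lemma betago_eq b cs m f x l j i : i < size l -> x \in leaves (nth (dft V) l i) ->
  (forall i', i' < i -> x \notin leaves (nth (dft V) l i')) ->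
  betago beta b cs m f x j l = beta (nth (dft V) l i) (mi b cs m f (j + i))
     (fun q => f ((j + i) :: q)) x.
Proof.
elim: l j i => [|c l IH] j [|i] //= ic xi H.
  by rewrite xi addn0.
have := H 0 erefl; rewrite /= => /negbTE ->.
by rewrite (IH j.+1 i) ?addSnnS // => i' i'i; apply: (H i'.+1).
Qed.

End G1.

Section G2.
Variables (V : finType) (G : sgraph V) (s : V -> nat) (K : nat).
Hypothesis sK : forall x, s x < K.
Implicit Types (t : cotree V) (cs : seq (cotree V)).
Notation ch cs i := (nth (dft V) cs i).
Notation wf := (wf G).
Definition kpc cs := kept (fun c => chi G (leafset c)) cs.
Notation beta := (beta kpc).
Notation mi := (mi kpc).
Notation alltight := (alltight G).

Lemma beta_child b cs m f x i : wf (Node b cs) -> i < size cs -> x \in leaves (ch cs i) ->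
  beta (Node b cs) m f x = beta (ch cs i) (mi b cs m f i) (fun q => f (i :: q)) x.
Proof.
move=> W ic xi; rewrite /= (betago_eq _ _ _ _ _ _ ic xi) //.
move=> i' i'i; apply/negP => xi'.
have := wf_disj W (ltn_trans i'i ic) ic xi' xi; move=> E; subst i'.
by rewrite ltnn in i'i.
Qed.

Definition enc c m := m * K + c.

Lemma K_pos (x : V) : 0 < K.
Proof. exact: leq_ltn_trans (leq0n _) (sK x). Qed.

Lemma enc_mod c m : c < K -> enc c m %% K = c.
Proof. by move=> cK; rewrite /enc modnMDl modn_small. Qed.

Lemma enc_inj c1 m1 c2 m2 (x : V) : c1 < K -> c2 < K -> enc c1 m1 = enc c2 m2 ->
  c1 = c2 /\ m1 = m2.
Proof.
move=> h1 h2 E; have Kp := K_pos x.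
have e1 : c1 = c2 by rewrite -(enc_mod m1 h1) E enc_mod.
split => //; move: E; rewrite /enc e1 => /eqP; rewrite eqn_add2r eqn_pmul2r //.
by move/eqP.
Qed.

Lemma run_eq T o a a' c c' : run G T o a c -> a =1 a' -> c =1 c' -> run G T o a' c'.
Proof.
move=> R /functional_extensionality Ea /functional_extensionality Ec; by rewrite -Ea -Ec.
Qed.

Lemma run_cat T o1 o2 a b c : run G T o1 a b -> run G T o2 b c -> run G T (o1 ++ o2) a c.
Proof.
elim: o1 a => [|p o1 IH] a /=.
  by move=> E; have -> : b = a by apply: functional_extensionality.
case=> s1 [St R1] R2; exists s1; split => //; exact: IH R1 R2.
Qed.

Lemma run_map_cons b cs i o a c : i < size cs -> run G (ch cs i) o a c ->
  run G (Node b cs) (map (cons i) o) a c.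
Proof.
move=> ic; elim: o a => [|p o IH] a //=.
case=> s1 [St R]; exists s1; split; last exact: IH.
by rewrite /step subtree_child.
Qed.

Lemma tight_root s' t : alltight s' t -> ncol s' (leafset t) = chi G (leafset t).
Proof. by move=> A; apply: (A [::]). Qed.

Lemma tight_child s' b cs i : alltight s' (Node b cs) -> i < size cs -> alltight s' (ch cs i).
Proof. by move=> A ic p w Sw; apply: (A (i :: p)); rewrite subtree_child. Qed.

Lemma proper_child b cs i : proper_on G (leafset (Node b cs)) s -> i < size cs ->
  proper_on G (leafset (ch cs i)) s.
Proof.
move=> P ic; have sub : leafset (ch cs i) \subset leafset (Node b cs).
  by apply/subsetP => y; exact: child_sub.
exact: (proper_on_sub sub P).
Qed.

Lemma colors_kept cs : wf (Node false cs) -> proper_on G (leafset (Node false cs)) s ->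
  alltight s (Node false cs) -> forall i, i < size cs ->
  {subset colors s (leafset (ch cs i)) <= colors s (leafset (ch cs (kpc cs)))}.
Proof.
move=> W P A i ic; have s2 := wf_size W; have c0 : 0 < size cs := ltn_trans (ltnSn 0) s2.
have kc : kpc cs < size cs by apply: kept_lt.
set k := kpc cs in kc *.
have tc j : j < size cs -> ncol s (leafset (ch cs j)) = chi G (leafset (ch cs j)).
  by move=> jc; apply: tight_root; apply: tight_child A jc.
have M : forall j, j < size cs -> ncol s (leafset (ch cs j)) <= ncol s (leafset (ch cs k)).
  move=> j jc; rewrite !tc //; exact: (kept_max (fun c => chi G (leafset c)) jc).
have [s' Us] := ustep_exists W kc M.
have P' := ustep_proper W kc Us (fun j jc => proper_child P jc).
have [x xv] := wf_leaf_nonempty W.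
have le1 : chi G (leafset (Node false cs)) <= ncol s (leafset (ch cs k)).
  rewrite -(ustep_ncol W kc Us); apply: (chi_le_ncol (x0 := x)) => //; by rewrite in_leafset.
have sub : {subset colors s (leafset (ch cs k)) <= colors s (leafset (Node false cs))}.
  by move=> c /colorsP [z zk ->]; apply: colors_mem; apply: child_sub zk.
have le2 : size (colors s (leafset (Node false cs))) <= size (colors s (leafset (ch cs k))).
  by change (ncol s (leafset (Node false cs)) <= ncol s (leafset (ch cs k))); rewrite (tight_root A).
have [_ E] := uniq_min_size (colors_uniq s _) sub le2.
move=> c /colorsP [z zi ->]; rewrite E; apply: colors_mem; exact: child_sub zi.
Qed.

Lemma Run t : wf t -> proper_on G (leafset t) s -> alltight s t -> forall m f o,
  run G t (post t) (fun x => if x \in leafset t then enc (s x) (beta t m f x) else o x)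
                   (fun x => if x \in leafset t then enc (s x) m else o x).
Proof.
elim/cotree_ind2: t => [v|b cs IH] W P A m f o.
  by move=> x /=; case: ifP.
set L := leafset (Node b cs).
pose fx x := find (fun c => x \in leaves c) cs.
have fxE i x : i < size cs -> x \in leaves (ch cs i) -> fx x = i.
  by move=> ic xi; apply: (wf_find W ic xi).
have inL x : x \in L -> fx x < size cs /\ x \in leaves (ch cs (fx x)).
  rewrite in_leafset => /leaves_nodeP [i ic xi]; by rewrite (fxE i x ic xi).
pose St j x := if x \in L then enc (s x) (if fx x < j then mi b cs m f (fx x)
               else beta (Node b cs) m f x) else o x.
have Ph1 : forall l j, drop j cs = l -> run G (Node b cs) (gofn (@post V) j l) (St j) (St (size cs)).
  elim=> [|c l IHl] j Dj.
    have js : size cs <= j by move/(congr1 size): Dj; rewrite size_drop /= => /eqP; rewrite subn_eq0.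
    move=> x; rewrite /St; case: ifP => // xL; have [lt _] := inL x xL.
    by rewrite lt (leq_trans lt js).
  have jc : j < size cs.
    by rewrite ltnNge; apply/negP => js; move: Dj; rewrite drop_oversize.
  move: Dj; rewrite (drop_nth (dft V) jc) => -[Ec Dl]; subst c.
  apply: (run_cat (b := St j.+1)); last exact: IHl.
  apply: run_map_cons => //.
  apply: (run_eq (IH j jc (wf_child W jc) (proper_child P jc) (tight_child A jc)
            (mi b cs m f j) (fun q => f (j :: q)) (St j))).
    move=> x; case: ifP => // xj; rewrite /St.
    have xj' : x \in leaves (ch cs j) by rewrite -in_leafset.
    by rewrite (child_sub b jc xj) (fxE j x jc xj') ltnn (beta_child m f W jc xj').
  move=> x; rewrite /St; case: ifP => xj.
    have xj' : x \in leaves (ch cs j) by rewrite -in_leafset.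
    by rewrite (child_sub b jc xj) (fxE j x jc xj') ltnSn.
  case: ifP => // xL; have [lt xf] := inL x xL.
  have E : fx x != j by apply/eqP => E; rewrite -in_leafset E xj in xf.
  by rewrite ltnS (leq_eqVlt (fx x) j) (negbTE E).
have S0 : (fun x => if x \in L then enc (s x) (beta (Node b cs) m f x) else o x) =1 St 0.
  by move=> x; rewrite /St ltn0.
apply: (run_eq (run_cat (Ph1 cs 0 (drop0 cs)) _) (fun x => esym (S0 x)) (fun x => erefl)).
set fin := fun x => if x \in L then enc (s x) m else o x.
exists fin; split => //.
rewrite /step /=.
have Sz x : x \in L -> St (size cs) x = enc (s x) (mi b cs m f (fx x)).
  by move=> xL; rewrite /St xL (inL x xL).1.
clear Ph1 S0; destruct b.
  move=> x; rewrite /fin; case: ifP => xL; first by rewrite Sz.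
  by rewrite /St xL.
have s2 := wf_size W; have c0 : 0 < size cs := ltn_trans (ltnSn 0) s2.
have kc : kpc cs < size cs by apply: kept_lt.
set k := kpc cs in kc.
set S1 := St (size cs).
have S1i i x : i < size cs -> x \in leaves (ch cs i) -> S1 x = enc (s x) (mi false cs m f i).
  move=> ic xi; rewrite /S1 Sz ?(fxE i x ic xi) //; by rewrite in_leafset; apply/leaves_nodeP; exists i.
have mik : mi false cs m f k = m by rewrite /mi /= eqxx.
exists (leafset (ch cs k)); first by apply/components_node => //; exists k.
split; first by move=> Gj /(components_node _ W) [i ic ->]; exact: (kept_max (fun c => chi G (leafset c)) ic).
pose Phi (X : {set V}) c := if c \in colors S1 X then enc (c %% K) m else c + m.+1 * K.
exists Phi; split; last first.
  move=> x; rewrite inE negb_and negbK /fin => /orP [xk|nL].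
    have xk' : x \in leaves (ch cs k) by rewrite -in_leafset.
    by rewrite (child_sub false kc xk) (S1i k x kc xk') mik.
  by rewrite (negbTE nL) /S1 /St (negbTE nL).
move=> Gj /(components_node _ W) [i ic ->] ne.
have colE c : c \in colors S1 (leafset (ch cs i)) -> exists2 x, x \in leaves (ch cs i) &
    c = enc (s x) (mi false cs m f i).
  by case/colorsP => x; rewrite in_leafset => xi ->; exists x => //; apply: S1i.
split; [|split].
- move=> c1 h1 c2; rewrite /Phi h1; have [x1 x1i ->] := colE c1 h1.
  rewrite enc_mod //; case: ifP => h2.
    have [x2 x2i ->] := colE c2 h2; rewrite enc_mod // => E.
    by have [-> _] := enc_inj x1 (sK x1) (sK x2) E.
  move=> E; exfalso; move: (leq_addl c2 (m.+1 * K)); rewrite -E /enc mulSn.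
  by rewrite addnC leq_add2l leqNgt sK.
- move=> c h; rewrite /Phi h; have [x xi ->] := colE c h; rewrite enc_mod //.
  have : s x \in colors s (leafset (ch cs k)).
    apply: (colors_kept W P A ic); apply: colors_mem; by rewrite in_leafset.
  case/colorsP => z zk Ez; rewrite Ez.
  have zk' : z \in leaves (ch cs k) by rewrite -in_leafset.
  by rewrite -mik -(S1i k z kc zk'); apply: colors_mem.
move=> x xi; have xi' : x \in leaves (ch cs i) by rewrite -in_leafset.
rewrite /fin (child_sub false ic xi) /Phi colors_mem // (S1i i x ic xi') enc_mod //.
Qed.

Lemma betago_range (bf : cotree V -> nat -> (seq nat -> nat) -> V -> nat) b cs m f x l j :
  (forall i, i < size l -> forall m' f', bf (nth (dft V) l i) m' f' x = m' \/
      exists2 q, q != [::] & bf (nth (dft V) l i) m' f' x = f' q) ->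
  betago kpc bf b cs m f x j l = m \/ exists2 q, q != [::] & betago kpc bf b cs m f x j l = f q.
Proof.
elim: l j => [|c l IH] j H /=; first by left.
case: ifP => xc; last by apply: IH => i il; apply: (H i.+1).
case: (H 0 erefl (mi b cs m f j) (fun q => f (j :: q))) => /= [->|[q qn ->]].
  rewrite /mi; case: ifP => _; first by left.
  by right; exists [:: j].
by right; exists (j :: q).
Qed.

Lemma beta_range t m f x : beta t m f x = m \/ exists2 q, q != [::] & beta t m f x = f q.
Proof.
elim/cotree_ind2: t m f => [v|b cs IH] m f /=; first by left.
by apply: betago_range => i ic m' f'; apply: IH.
Qed.

Lemma beta_form b cs m f x i : wf (Node b cs) -> i < size cs -> x \in leaves (ch cs i) ->
  (beta (Node b cs) m f x = m /\ (b || (i == kpc cs))) \/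
  exists q, beta (Node b cs) m f x = f (i :: q).
Proof.
move=> W ic xi; rewrite (beta_child m f W ic xi).
case: (beta_range (ch cs i) (mi b cs m f i) (fun q => f (i :: q)) x) => [->|[q _ ->]].
  rewrite /mi; case: ifP => h; first by left.
  by right; exists [::].
by right; exists q.
Qed.

Lemma Inj t : wf t -> proper_on G (leafset t) s -> forall m f, injective f ->
  (forall q, q != [::] -> f q != m) ->
  {in leafset t &, injective (fun x => enc (s x) (beta t m f x))}.
Proof.
elim/cotree_ind2: t => [v|b cs IH] W P m f finj Cf x y.
  by rewrite leafset_leaf !inE => /eqP -> /eqP ->.
rewrite !in_leafset => /leaves_nodeP [i ic xi] /leaves_nodeP [j jc yj] E.
have [sxy bxy] := enc_inj x (sK x) (sK y) E.
case: (eqVneq i j) => [Eij|ij].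
  subst j; move: E; rewrite (beta_child m f W ic xi) (beta_child m f W ic yj) => E.
  apply: (IH i ic (wf_child W ic) (proper_child P ic) (mi b cs m f i) (fun q => f (i :: q)) _ _ x y);
    rewrite ?in_leafset //.
  - by move=> q1 q2 H; case: (finj _ _ H).
  move=> q qn; rewrite /mi; case: ifP => _; first exact: Cf.
  by apply/eqP => /finj [] /eqP; apply/negP.
exfalso.
case: (beta_form m f W ic xi) => [[bx hx]|[q bx]];
  case: (beta_form m f W jc yj) => [[by' hy]|[q' by']].
- clear IH E bxy bx by'; destruct b.
    move: (P x y); rewrite !in_leafset (wf_cross W ic jc ij xi yj) sxy eqxx.
    have xl : x \in leaves (Node true cs) by apply/leaves_nodeP; exists i.
    have yl : y \in leaves (Node true cs) by apply/leaves_nodeP; exists j.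
    by move/(_ xl yl erefl).
  by move: hx hy ij => /= /eqP -> /eqP ->; rewrite eqxx.
- by move: (Cf (j :: q') erefl); rewrite -by' -bxy bx eqxx.
- by move: (Cf (i :: q) erefl); rewrite -bx bxy by' eqxx.
by move: bxy; rewrite bx by' => /finj [] Eij _; rewrite Eij eqxx in ij.
Qed.

End G2.

Section G3.
Variables (V : finType).
Implicit Types (t : cotree V) (cs : seq (cotree V)).
Notation ch cs i := (nth (dft V) cs i).

Lemma mem_gofn (f : cotree V -> seq (seq nat)) l j q :
  reflect (exists i, exists2 q', i < size l /\ q = (j + i) :: q' & q' \in f (nth (dft V) l i))
    (q \in gofn f j l).
Proof.
elim: l j q => [|c l IH] j q /=.
  by rewrite in_nil; constructor => -[i [q' []]].
rewrite mem_cat; apply: (iffP orP).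
  case=> [/mapP [q' q'c ->]|/(IH j.+1) [i [q' [il ->] q'i]]].
    by exists 0, q'; rewrite ?addn0.
  by exists i.+1, q'; rewrite ?addSnnS.
case=> [[|i] [q' [il ->] q'i]].
  by left; rewrite addn0; apply: map_f.
by right; apply/(IH j.+1); exists i, q'; rewrite ?addSnnS.
Qed.

Lemma addS_neq j i : j + i.+1 = j -> False.
Proof.
move=> E; have H : j < j + i.+1 by rewrite addnS ltnS leq_addr.
by rewrite E ltnn in H.
Qed.

Lemma nil_notin_gofn (f : cotree V -> seq (seq nat)) l j : [::] \notin gofn f j l.
Proof. by apply/negP => /mem_gofn [i [q' [_ E] _]]. Qed.

Lemma uniq_gofn (f : cotree V -> seq (seq nat)) l j : (forall i, i < size l -> uniq (f (nth (dft V) l i))) -> uniq (gofn f j l).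
Proof.
elim: l j => [|c l IH] j //= H; rewrite cat_uniq; apply/and3P; split.
- by rewrite map_inj_uniq ?(H 0) // => q1 q2 [].
- apply/hasPn => q /mem_gofn [i [q' [_ ->] _]]; apply/mapP => -[q'' _ [E _]].
  by apply: (@addS_neq j i); rewrite -addSnnS.
by apply: IH => i il; apply: (H i.+1).
Qed.

Lemma idx_gofn (f : cotree V -> seq (seq nat)) l j i x : i < size l ->
  x \in f (nth (dft V) l i) ->
  index ((j + i) :: x) (gofn f j l) =
  sumn (map (fun c => size (f c)) (take i l)) + index x (f (nth (dft V) l i)).
Proof.
elim: l j i => [|c l IH] j [|i] //= il xi.
  by rewrite addn0 index_cat map_f // index_map //; move=> q1 q2 [].
rewrite index_cat ifF; last first.
  by apply/negP => /mapP [q _ [E _]]; apply: (@addS_neq j i).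
by rewrite size_map -addSnnS IH // addnA.
Qed.

Lemma inner_node b cs i q : inner (Node b cs) (i :: q) <-> i < size cs /\ inner (ch cs i) q.
Proof.
split.
  move=> [b' [cs' S]]; move: S => /=; case E: (onth cs i) => [c|] //= S.
  by case/onth_some: E => ic Ec; subst c; split => //; exists b', cs'.
by case=> ic [b' [cs' S]]; exists b', cs'; rewrite subtree_child.
Qed.

Lemma post_mem t q : q \in post t <-> inner t q.
Proof.
elim/cotree_ind2: t q => [v|b cs IH] q.
  split => //; case: q => [|i q] [b' [cs' S]] //.
rewrite /= mem_cat inE; split.
  case/orP => [/mem_gofn [i [q' [ic ->] q'i]]|/eqP ->]; last by exists b, cs.
  by apply/inner_node; split => //; apply/IH.
case: q => [|i q]; first by rewrite eqxx orbT.
case/inner_node => ic inq; apply/orP; left; apply/mem_gofn; exists i, q => //.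
by apply/IH.
Qed.

Lemma post_uniq t : uniq (post t).
Proof.
elim/cotree_ind2: t => [v|b cs IH] //=.
by rewrite cat_uniq /= uniq_gofn //= orbF andbT nil_notin_gofn.
Qed.

Lemma post_order t p q : p \in post t -> q \in post t -> prefix p q -> p != q ->
  index q (post t) < index p (post t).
Proof.
elim/cotree_ind2: t p q => [v|b cs IH] p q //=.
set F := gofn _ 0 cs.
have nF := @nil_notin_gofn (@post V) cs 0.
rewrite !mem_cat !inE => hp hq pq npq.
have qF : q \in F.
  case/orP: hq => // /eqP E; subst q; move: pq; rewrite prefixs0 => E.
  by rewrite E in npq.
rewrite !index_cat qF; case: p hp pq npq => [|i p'] hp pq npq.
  by rewrite (negbTE nF) /= ?eqxx ?addn0 index_mem.
have pF : (i :: p') \in F by case/orP: hp => //.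
rewrite pF.
case: q hq qF pq npq => [|j q'] hq qF; first by rewrite (negbTE nF) in qF.
rewrite /= => /andP [/eqP Eij pq'] npq; subst j.
move: pF qF => /mem_gofn [i1 [p1 [i1c [E1 E2]] p1i]] /mem_gofn [i2 [q1 [i2c [E3 E4]] q1i]].
rewrite ?add0n in E1 E3; subst i1 i2 p1 q1.
rewrite -{1}(add0n i) -{2}(add0n i) !idx_gofn // ltn_add2l.
apply: IH => //; apply: contra npq => /eqP ->; by [].
Qed.

Lemma post_traversal t : traversal t (post t).
Proof.
split; first exact: post_uniq.
split; first by move=> p; exact: post_mem.
by move=> p q; exact: post_order.
Qed.

End G3.

Unset Implicit Arguments.

Theorem theorem10 (V : finType) (G : sgraph V) (T : cotree V) :
  cograph G -> discr_cotree G T ->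
  (forall s0 : V -> nat, injective s0 ->
   forall ord, traversal T ord ->
     (forall o1 p o2 s, ord = o1 ++ p :: o2 -> run G T o1 s0 s ->
        exists s', step G T p s s') /\
     (forall s, run G T ord s0 s -> rec_minimal G s)) /\
  (forall s : V -> nat, rec_minimal G s ->
     exists s0 : V -> nat, injective s0 /\
     exists ord, traversal T ord /\ run G T ord s0 s).
Proof.
move=> _ D; have [W allT] := wf_T D.
have LT : leafset T = setT by apply/setP => x; rewrite in_leafset allT inE.
split.
  move=> s0 inj ord tr; split.
    move=> o1 p o2 s Eo R.
    have Eo' : ord = [::] ++ o1 ++ (p :: o2) by rewrite Eo.
    have I := inv_run W tr Eo' (inv_nil G T inj) R.
    exact: (feasible W tr Eo I).
  move=> s R.
  have Eo' : ord = [::] ++ ord ++ [::] by rewrite cats0.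
  have I := inv_run W tr Eo' (inv_nil G T inj) R; rewrite /= in I.
  have F := final_ok tr I.
  split; first by rewrite -LT; exact: (F [::] T erefl).1.
  rewrite -LT; apply: (cm_all W (s := s) _ (p := [::])) => //.
  by move=> p t St; exact: (F p t St).2.
move=> s RM; have [P A] := rm_alltight W allT RM.
set K := (\max_(y : V) s y).+1.
have sK : forall x, s x < K by move=> x; rewrite ltnS; apply: (leq_bigmax x).
pose fpick (q : seq nat) := (pickle q).+1.
have finj : injective fpick by move=> q1 q2 [] /(pcan_inj pickleK).
have Cf : forall q, q != [::] -> fpick q != 0 by [].
exists (fun x => enc K (s x) (beta (kpc G) T 0 fpick x)); split.
  move=> x y E; apply: (Inj sK W P finj Cf) => //; by rewrite LT inE.
exists (post T); split; first exact: post_traversal.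
by apply: (run_eq (Run sK W P A 0 fpick s)) => x; rewrite LT inE.
Qed.
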